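(* In the algorithm DOBGA described in the context, let $\mathbf{r}_i(t)=\mathbf{x}_i(t)-\mathbf{y}_i(t)$. If $\|\widetilde{\nabla}f_{t,i}(\mathbf{x})\|\le G_{1}$ for all $i\in[N]$, $t\in[T]$, $\mathbf{x}\in\mathcal{X}$, then $\|\mathbf{r}_{i}(t+1)\|\le\eta_{t}(1-1/e)G_{1}$ for all $t\in[T]$ and $i\in[N]$.
   Context: $\mathcal{X}=\prod_{l=1}^n[0,a_l]$, $\mathcal{K}\subseteq\mathcal{X}$ a bounded convex set. $N$ nodes on a connected undirected graph with neighbor sets $\mathcal{N}_i$; weight matrix $\mathbf{A}=[a_{ij}]\in\mathbb{R}_+^{N\times N}$ symmetric, doubly stochastic, $a_{ij}=0$ if $j\notin\mathcal{N}_i\cup\{i\}$. For each $t,i$, $\widetilde{\nabla}f_{t,i}$ is a stochastic gradient oracle of a function $f_{t,i}:\mathcal{X}\to\mathbb{R}_+$. Algorithm DOBGA with step sizes $\eta_t>0$: initialize $\mathbf{x}_i(1)\in\mathcal{K}$; for $t=1,\dots,T$ and each $i$, draw $z_i(t)\in[0,1]$ with $\Pr(\mathbf{Z}\le z)=\frac{e^{z-1}-1/e}{1-1/e}$, set $\mathbf{y}_i(t+1)=\sum_{j\in\mathcal{N}_i\cup\{i\}}a_{ij}\mathbf{x}_j(t)+\eta_t(1-1/e)\widetilde{\nabla}f_{t,i}(z_i(t)\mathbf{x}_i(t))$ and $\mathbf{x}_i(t+1)=\arg\min_{\mathbf{z}\in\mathcal{K}}\|\mathbf{z}-\mathbf{y}_i(t+1)\|$.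 *)

(* Defs.v *)
From HB Require Import structures.
From mathcomp Require Import all_boot all_order all_algebra.
From mathcomp Require Import all_classical all_reals all_analysis.
Set Implicit Arguments. Unset Strict Implicit. Unset Printing Implicit Defensive.
Import Order.TTheory GRing.Theory Num.Theory.
Local Open Scope ring_scope.
Local Open Scope classical_set_scope.

Definition enorm (R : realType) (n : nat) (v : 'rV[R]_n) : R :=
  Num.sqrt (\sum_(l < n) (v ord0 l) ^+ 2).

Definition box (R : realType) (n : nat) (a : 'I_n -> R) : set 'rV[R]_n :=
  [set v | forall l : 'I_n, 0 <= v ord0 l <= a l].

Definition convex_rv (R : realType) (n : nat) (K : set 'rV[R]_n) : Prop :=
  forall u v, K u -> K v -> forall lam : R, 0 <= lam <= 1 ->
    K (lam *: u + (1 - lam) *: v).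

Definition bounded_rv (R : realType) (n : nat) (K : set 'rV[R]_n) : Prop :=
  exists M : R, forall v, K v -> enorm v <= M.

Definition is_proj (R : realType) (n : nat) (K : set 'rV[R]_n) (y z : 'rV[R]_n) : Prop :=
  K z /\ forall w, K w -> enorm (z - y) <= enorm (w - y).

Definition conn_undirected_graph (N : nat) (adj : rel 'I_N) : Prop :=
  (forall i j, adj i j = adj j i) /\ (forall i, ~~ adj i i) /\
  (forall i j, connect adj i j).

Definition weight_matrix (R : realType) (N : nat) (adj : rel 'I_N) (A : 'M[R]_N) : Prop :=
  (forall i j, 0 <= A i j) /\ (forall i j, A i j = A j i) /\
  (forall i, \sum_j A i j = 1) /\ (forall j, \sum_i A i j = 1) /\
  (forall i j, ~~ adj i j -> j != i -> A i j = 0).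

(* Main.v *)
Require Import Defs.
From HB Require Import structures.
From mathcomp Require Import all_boot all_order all_algebra.
From mathcomp Require Import all_classical all_reals all_analysis.
Import Order.TTheory GRing.Theory Num.Theory.
Local Open Scope ring_scope.
Local Open Scope classical_set_scope.

Lemma enormZ (R : realType) (n : nat) (c : R) (v : 'rV[R]_n) :
  enorm (c *: v) = `|c| * enorm v.
Proof.
rewrite /enorm.
under eq_bigr => l _ do rewrite mxE exprMn.
by rewrite -mulr_sumr sqrtrM ?sqr_ge0 // sqrtr_sqr.
Qed.

Lemma convex_sum (R : realType) (n : nat) (K : set 'rV[R]_n) (I : eqType)
  (p : I -> 'rV[R]_n) (s : seq I) :
  convex_rv K -> (forall i, K (p i)) ->
  forall w : I -> R, (forall i, 0 <= w i) -> \sum_(i <- s) w i = 1 ->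
  K (\sum_(i <- s) w i *: p i).
Proof.
move=> cK Kp; elim: s => [|i s IH] w w0 ws1.
  by move: ws1; rewrite big_nil => /eqP; rewrite eq_sym oner_eq0.
rewrite big_cons in ws1 *; rewrite big_cons.
set S := \sum_(j <- s) w j in ws1.
have S0 : 0 <= S by apply: sumr_ge0.
have [S00|Sn0] := eqVneq S 0.
  have := S00; rewrite /S => /eqP; rewrite psumr_eq0 // => /allP wz.
  rewrite big_seq big1 ?addr0; last first.
    by move=> j js; move: (wz j js) => /= /eqP ->; rewrite scale0r.
  by move: ws1; rewrite S00 addr0 => ->; rewrite scale1r.
have -> : \sum_(j <- s) w j *: p j = S *: \sum_(j <- s) (w j / S) *: p j.
  rewrite scaler_sumr; apply: eq_bigr => j _.
  by rewrite scalerA mulrCA mulfV // mulr1.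
have wi : w i = 1 - S by rewrite -ws1 addrK.
have Kq : K (\sum_(j <- s) (w j / S) *: p j).
  apply: IH; first by move=> j; apply: divr_ge0.
  by rewrite -mulr_suml mulfV.
have := cK (p i) _ (Kp i) Kq (w i).
have e : 1 - (1 - S) = S by rewrite opprB addrC subrK.
rewrite wi e; apply.
by rewrite -wi w0 /= wi lerBlDr lerDl.
Qed.

Theorem lemma15 (R : realType) (n N T : nat) (a : 'I_n -> R)
  (K : set 'rV[R]_n) (adj : rel 'I_N) (A : 'M[R]_N)
  (g : nat -> 'I_N -> 'rV[R]_n -> 'rV[R]_n)
  (eta : nat -> R) (z : nat -> 'I_N -> R)
  (x y : nat -> 'I_N -> 'rV[R]_n) (G1 : R) :
  (forall l, 0 <= a l) ->
  K `<=` box a -> convex_rv K -> bounded_rv K ->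
  conn_undirected_graph adj -> weight_matrix adj A ->
  (forall t, (1 <= t <= T)%N -> 0 < eta t) ->
  (forall i, K (x 1%N i)) ->
  (forall t i, (1 <= t <= T)%N -> 0 <= z t i <= 1) ->
  (forall t i, (1 <= t <= T)%N ->
     y t.+1 i = \sum_(j | adj i j || (j == i)) A i j *: x t j
                + (eta t * (1 - (expR 1)^-1)) *: g t i (z t i *: x t i)) ->
  (forall t i, (1 <= t <= T)%N -> is_proj K (y t.+1 i) (x t.+1 i)) ->
  (forall t i v, (1 <= t <= T)%N -> box a v -> enorm (g t i v) <= G1) ->
  forall t i, (1 <= t <= T)%N ->
    enorm (x t.+1 i - y t.+1 i) <= eta t * (1 - (expR 1)^-1) * G1.
Proof.
move=> a0 Kbox cK _ _ [A0 [_ [Arow [_ Aadj]]]] eta0 x1 z01 yE proj gG t i tT.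
have xK : forall t, (1 <= t <= T.+1)%N -> forall i, K (x t i).
  elim=> [//|[|t'] IH] ht j; first exact: x1.
  by case: (proj t'.+1 j) => //; rewrite ltn0Sn /= -ltnS; case/andP: ht.
have xtK : forall j, K (x t j).
  by move=> j; apply: xK; case/andP: tT => -> /= /leqW.
set c := eta t * (1 - (expR 1)^-1).
have c0 : 0 <= c.
  apply: mulr_ge0; first exact/ltW/eta0.
  rewrite subr_ge0 invf_le1 ?expR_gt0 //.
  by rewrite -expR0 ler_expR.
set w := \sum_(j | adj i j || (j == i)) A i j *: x t j.
have Kw : K w.
  have -> : w = \sum_(j <- index_enum 'I_N) A i j *: x t j.
    rewrite /w big_mkcond /=; apply: eq_bigr => j _.
    case: ifP => // /negbT; rewrite negb_or => /andP [h1 h2].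
    by rewrite Aadj // scale0r.
  by apply: convex_sum => //; apply: Arow.
have [_ pr] := proj t i tT.
apply: le_trans (pr w Kw) _.
rewrite yE // opprD addrA subrr add0r -scaleNr enormZ normrN ger0_norm //.
rewrite ler_wpM2l //; apply: gG => // l.
have := Kbox _ (xtK i) l; rewrite mxE => /andP [h1 h2].
have [z0 z1] := andP (z01 t i tT).
rewrite mulr_ge0 //=; apply: le_trans h2.
by rewrite -[X in _ <= X]mul1r ler_wpM2r.
Qed.
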